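(* Let $N\ge2$ and $(b,a)\in\mathcal{M}=\mathbb{R}^N\times\mathbb{R}_{>0}^N$. Then for all $1\le j\le 2N$, $\lambda_j(S(b,a))=-\lambda_{2N+1-j}(b,a)$. If $N$ is even, then for all $1\le j\le N$, $\lambda_j^+(S(b,a))=-\lambda^+_{N+1-j}(b,a)$ and $\lambda_j^-(S(b,a))=-\lambda^-_{N+1-j}(b,a)$; if $N$ is odd, then for all $1\le j\le N$, $\lambda_j^+(S(b,a))=-\lambda^-_{N+1-j}(b,a)$ and $\lambda_j^-(S(b,a))=-\lambda^+_{N+1-j}(b,a)$. Moreover, for all $1\le k\le N-1$, $\gamma_k(S(b,a))=\gamma_{N-k}(b,a)$.
   Context: Indices of $(b,a)$ are mod $N$; $S(b,a)=(b',a')$ with $b'_j=-b_{N-j}$, $a'_j=a_{N-j-1}$. $L^\pm(b,a)$ is the $N\times N$ symmetric matrix with diagonal $b_1,\dots,b_N$, entries $(n,n+1),(n+1,n)$ equal to $a_n$ ($1\le n\le N-1$), and entries $(1,N),(N,1)$ equal to $\pm a_N$. $\lambda^\pm_1\le\dots\le\lambda^\pm_N$ are the eigenvalues of $L^\pm(b,a)$ in increasing order with multiplicity, and $\lambda_1\le\dots\le\lambda_{2N}$ are all eigenvalues of $L^+$ and $L^-$ together, in increasing order with multiplicity (these satisfy $\lambda_1<\lambda_2\le\lambda_3<\dots\le\lambda_{2N-1}<\lambda_{2N}$). The $k$-th gap length is $\gamma_k=\lambda_{2k+1}-\lambda_{2k}$. *)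

(* Defs.v *)
From HB Require Import structures.
From mathcomp Require Import all_boot all_order all_algebra.
From mathcomp Require Import reals.
From Stdlib Require Import ClassicalEpsilon.
Set Implicit Arguments. Unset Strict Implicit. Unset Printing Implicit Defensive.
Import Order.TTheory GRing.Theory Num.Theory.
Local Open Scope ring_scope.

Section Toda.
Variable R : realType.

(* A point (b,a) is a pair of sequences indexed 1-based: b_j = fst p j, a_j = snd p j
   for 1 <= j <= N; other values are irrelevant (indices are reduced mod N). *)
Definition pt := ((nat -> R) * (nat -> R))%type.

Definition md (N k : nat) : nat := ((k + N - 1) %% N).+1.

(* S(b,a) = (b',a'), b'_j = - b_{N-j}, a'_j = a_{N-j-1} (indices mod N) *)
Definition Sop (N : nat) (p : pt) : pt :=
  (fun j => - p.1 (md N (N - j)), fun j => p.2 (md N (N + N - j - 1))).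

(* L^{s}(b,a), s = 1 for L^+ and s = -1 for L^-; row/column i : 'I_N stands for i+1.
   Entries from the tridiagonal part and the corner are added (relevant only for N = 2). *)
Definition Lmat (N : nat) (s : R) (p : pt) : 'M[R]_N :=
  \matrix_(i < N, j < N)
    ((i == j :> nat)%:R * p.1 i.+1
     + (j == i.+1 :> nat)%:R * p.2 i.+1
     + (i == j.+1 :> nat)%:R * p.2 j.+1
     + s * p.2 N * (((i == 0%N :> nat) && (j == N.-1 :> nat))%:R
                    + ((i == N.-1 :> nat) && (j == 0%N :> nat))%:R)).

Definition is_eigseq (n : nat) (A : 'M[R]_n) (s : seq R) : Prop :=
  sorted <=%R s /\ char_poly A = \prod_(x <- s) ('X - x%:P).

Definition eigs (n : nat) (A : 'M[R]_n) : seq R :=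
  epsilon (inhabits [::]) (is_eigseq A).

Definition lamp (N : nat) (p : pt) (j : nat) : R := nth 0 (eigs (Lmat N 1 p)) j.-1.
Definition lamm (N : nat) (p : pt) (j : nat) : R := nth 0 (eigs (Lmat N (-1) p)) j.-1.

Definition lam (N : nat) (p : pt) (j : nat) : R :=
  nth 0 (sort <=%R (eigs (Lmat N 1 p) ++ eigs (Lmat N (-1) p))) j.-1.

Definition gap (N : nat) (p : pt) (k : nat) : R := lam N p (2 * k).+1 - lam N p (2 * k).

End Toda.

(* Main.v *)
Require Import Defs.
From HB Require Import structures.
From mathcomp Require Import all_boot all_order all_algebra.
From mathcomp Require Import reals.
From mathcomp Require Import sesquilinear spectral.
From mathcomp.real_closed Require Import complex.
From mathcomp Require Import zify ring lra.
From Stdlib Require Import ClassicalEpsilon.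
Import Order.TTheory GRing.Theory Num.Theory.
Local Open Scope ring_scope.


Lemma prod_XsubC_perm (F : idomainType) (s1 s2 : seq F) :
  \prod_(x <- s1) ('X - x%:P) = \prod_(x <- s2) ('X - x%:P) -> perm_eq s1 s2.
Proof.
elim: s1 s2 => [|x s1 IH] s2 E.
  have := congr1 (fun p : {poly F} => size p) E; rewrite !size_prod_XsubC.
  by case: s2 {E} => // y s2' [].
have xs2 : x \in s2.
  by rewrite -root_prod_XsubC -E big_cons rootM root_XsubC eqxx.
have P2 := perm_to_rem xs2.
rewrite (perm_big _ P2) /= !big_cons in E.
have := mulfI (negbT (polyXsubC_eq0 x)) E => /IH H.
have H2 : perm_eq (x :: rem x s2) s2 by rewrite perm_sym.
by rewrite (perm_trans _ H2) // perm_cons.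
Qed.

Section E.
Variable R : realType.

Lemma eigs_eq n (A : 'M[R]_n) s : is_eigseq A s -> eigs A = s.
Proof.
move=> Hs.
have H : is_eigseq A (eigs A).
  by rewrite /eigs; apply: epsilon_spec; exists s.
case: H Hs => [S1 E1] [S2 E2].
apply: (sorted_eq le_trans le_anti) => //.
by apply: prod_XsubC_perm; rewrite -E1 -E2.
Qed.

Lemma is_eigseq_size n (A : 'M[R]_n) s : is_eigseq A s -> size s = n.
Proof.
case=> _ E; have := congr1 (fun p : {poly R} => size p) E.
by rewrite size_char_poly size_prod_XsubC => -[].
Qed.

Lemma char_polyN n (A : 'M[R]_n) :
  char_poly (- A) = (-1) ^+ n * (char_poly A \Po (- 'X)).
Proof.
rewrite /char_poly -det_map_mx -detZ; congr (\det _).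
apply/matrixP => i j; rewrite !mxE.
rewrite rmorphB rmorphMn /= comp_polyX comp_polyC polyCN.
by case: (i == j); rewrite ?mulr1n ?mulr0n; ring.
Qed.

Lemma prod_negX (s : seq R) :
  (-1) ^+ size s * (\prod_(x <- s) ('X - x%:P) \Po (- 'X)) =
  \prod_(x <- map -%R s) ('X - x%:P).
Proof.
elim: s => [|x s IH]; first by rewrite /= !big_nil comp_polyC mul1r.
rewrite /= !big_cons comp_polyM exprS -IH comp_polyB comp_polyX comp_polyC polyCN.
ring.
Qed.

End E.


Section S1.
Variable R : realType.

Lemma char_poly_conj (F : comNzRingType) n (P Q A : 'M[F]_n) :
  Q *m P = 1%:M -> char_poly (P *m A *m Q) = char_poly A.
Proof.
move=> QP.
have PQ : P *m Q = 1%:M by apply: mulmx1C.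
rewrite /char_poly /char_poly_mx !map_mxM.
set P' := map_mx polyC P; set Q' := map_mx polyC Q; set A' := map_mx polyC A.
have PQ' : P' *m Q' = 1%:M by rewrite -map_mxM PQ map_mx1.
have eX : ('X%:M : 'M[{poly F}]_n) = P' *m 'X%:M *m Q'.
  by rewrite mul_mx_scalar -scalemxAl PQ' -mul_mx_scalar mul1mx.
rewrite [in LHS]eX -mulmxBl -mulmxBr !det_mulmx mulrC mulrA -det_mulmx.
by rewrite (mulmx1C PQ') det1 mul1r.
Qed.

Lemma eigseq_exists n (A : 'M[R]_n) : A^T = A -> exists s, is_eigseq A s.
Proof.
move=> Asym.
pose f := real_complex R.
pose AC := map_mx f A.
have ACh : AC \is hermsymmx.
  apply: realsym_hermsym.
    apply/is_hermitianmxP; rewrite expr0 scale1r map_mx_id // /AC map_trmx Asym //.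
  apply/mxOverP => i j; rewrite mxE; apply/complex_realP; by exists (A i j).
have := hermitian_spectral_diag_real ACh.
have /orthomx_spectralP ACe := hermitian_normalmx ACh.
set d := spectral_diag AC.
move=> /mxOverP dreal.
have dRe i : d 0 i = f (@complex.Re R (d 0 i)).
  by have /complex_realP [k ->] := dreal 0 i; rewrite /f.
exists (sort <=%R [seq @complex.Re R (d 0 i) | i <- enum 'I_n]).
split; first by apply: sort_sorted; exact: le_total.
apply: (@map_poly_inj _ _ f).
rewrite map_char_poly -/AC ACe char_poly_conj; last by rewrite mulmxV // spectral_unit.
rewrite char_poly_trig; last first. { apply/is_trig_mxP => i j lt; by rewrite mxE -val_eqE /= ltn_eqF. }
rewrite (perm_big _ (etrans (perm_sort _ _ _) (perm_refl _))) /= big_map big_enum /=.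
rewrite rmorph_prod; apply: eq_bigr => i _.
rewrite rmorphB /= map_polyX map_polyC /= mxE eqxx mulr1n -/d {1}(dRe i); reflexivity.
Qed.
End S1.


Section S.
Variable R : realType.

Definition F (N : nat) (s : R) (p : pt R) (i j : nat) : R :=
    ((i == j :> nat)%:R * p.1 i.+1
     + (j == i.+1 :> nat)%:R * p.2 i.+1
     + (i == j.+1 :> nat)%:R * p.2 j.+1
     + s * p.2 N * (((i == 0%N :> nat) && (j == N.-1 :> nat))%:R
                    + ((i == N.-1 :> nat) && (j == 0%N :> nat))%:R)).

Definition tau (N i : nat) : nat := if i == N.-1 then N.-1 else (N - 2 - i)%N.
Definition eps (N : nat) (s : R) (i : nat) : R :=
  if i == N.-1 then s else (if (i %% 2 == 0)%N then -1 else 1).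

Definition bS (N : nat) (b : nat -> R) (j : nat) : R := - b (if j == N then N else (N - j)%N).
Definition aS (N : nat) (a : nat -> R) (j : nat) : R :=
  a (if j == N.-1 then N else if j == N then N.-1 else (N - j - 1)%N).

Ltac noif t := lazymatch t with context [if _ then _ else _] => fail | _ => idtac end.
Ltac handle_neq E x y :=
  first [ have ? : (x < y)%N by lia | have ? : (y < x)%N by lia
        | have [?|?] : (x < y)%N \/ (y < x)%N by lia ]; clear E.
Ltac dest_eq :=
  match goal with
  | |- context [ (?x == ?y :> nat) ] =>
      noif x; noif y;
      let E := fresh "E" in
      destruct (x == y) eqn:E; [move/eqP: E => E | move/eqP: E => E; handle_neq E x y];
      cbv iota beta; try (exfalso; lia)
  end.

Ltac unify_idx f :=
  repeat match goal with |- context [f ?x] =>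
    match goal with |- context [f ?y] =>
      assert_fails (constr_eq x y);
      rewrite [f x](_ : f x = f y); last by (congr f; lia) end end.

Lemma entry_A_true (N : nat) (b a : nat -> R) (i j : nat) :
  (2 <= N)%N -> (i < N)%N -> (j < N)%N -> (i = N.-1 /\ j = N.-1) ->
  F N (if true then 1 else -1) (bS N b, aS N a) i j =
  - (eps N (if true then 1 else -1) i *
     F N (if (N %% 2 == 0)%N then (if true then 1 else -1) else -(if true then 1 else -1)) (b, a) (tau N i) (tau N j)
     * eps N (if true then 1 else -1) j).
Proof.
move=> N2 iN jN H; case: H => *.
rewrite /F /tau /eps /bS /aS /=.
repeat dest_eq; rewrite /= ?mulr0n ?mulr1n; unify_idx b; unify_idx a; lra.
Qed.

Lemma entry_A_false (N : nat) (b a : nat -> R) (i j : nat) :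
  (2 <= N)%N -> (i < N)%N -> (j < N)%N -> (i = N.-1 /\ j = N.-1) ->
  F N (if false then 1 else -1) (bS N b, aS N a) i j =
  - (eps N (if false then 1 else -1) i *
     F N (if (N %% 2 == 0)%N then (if false then 1 else -1) else -(if false then 1 else -1)) (b, a) (tau N i) (tau N j)
     * eps N (if false then 1 else -1) j).
Proof.
move=> N2 iN jN H; case: H => *.
rewrite /F /tau /eps /bS /aS /=.
repeat dest_eq; rewrite /= ?mulr0n ?mulr1n; unify_idx b; unify_idx a; lra.
Qed.

Lemma entry_B_true (N : nat) (b a : nat -> R) (i j : nat) :
  (2 <= N)%N -> (i < N)%N -> (j < N)%N -> ((i < N.-1)%N /\ j = N.-1) ->
  F N (if true then 1 else -1) (bS N b, aS N a) i j =
  - (eps N (if true then 1 else -1) i *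
     F N (if (N %% 2 == 0)%N then (if true then 1 else -1) else -(if true then 1 else -1)) (b, a) (tau N i) (tau N j)
     * eps N (if true then 1 else -1) j).
Proof.
move=> N2 iN jN H; case: H => *.
rewrite /F /tau /eps /bS /aS /=.
repeat dest_eq; rewrite /= ?mulr0n ?mulr1n; unify_idx b; unify_idx a; lra.
Qed.

Lemma entry_B_false (N : nat) (b a : nat -> R) (i j : nat) :
  (2 <= N)%N -> (i < N)%N -> (j < N)%N -> ((i < N.-1)%N /\ j = N.-1) ->
  F N (if false then 1 else -1) (bS N b, aS N a) i j =
  - (eps N (if false then 1 else -1) i *
     F N (if (N %% 2 == 0)%N then (if false then 1 else -1) else -(if false then 1 else -1)) (b, a) (tau N i) (tau N j)
     * eps N (if false then 1 else -1) j).
Proof.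
move=> N2 iN jN H; case: H => *.
rewrite /F /tau /eps /bS /aS /=.
repeat dest_eq; rewrite /= ?mulr0n ?mulr1n; unify_idx b; unify_idx a; lra.
Qed.

Lemma entry_C_true (N : nat) (b a : nat -> R) (i j : nat) :
  (2 <= N)%N -> (i < N)%N -> (j < N)%N -> ((i < N.-1)%N /\ (j < N.-1)%N /\ (i <= j)%N) ->
  F N (if true then 1 else -1) (bS N b, aS N a) i j =
  - (eps N (if true then 1 else -1) i *
     F N (if (N %% 2 == 0)%N then (if true then 1 else -1) else -(if true then 1 else -1)) (b, a) (tau N i) (tau N j)
     * eps N (if true then 1 else -1) j).
Proof.
move=> N2 iN jN [H1 [H2 H3]].
rewrite /F /tau /eps /bS /aS /=.
repeat dest_eq; rewrite /= ?mulr0n ?mulr1n; unify_idx b; unify_idx a; lra.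
Qed.

Lemma entry_C_false (N : nat) (b a : nat -> R) (i j : nat) :
  (2 <= N)%N -> (i < N)%N -> (j < N)%N -> ((i < N.-1)%N /\ (j < N.-1)%N /\ (i <= j)%N) ->
  F N (if false then 1 else -1) (bS N b, aS N a) i j =
  - (eps N (if false then 1 else -1) i *
     F N (if (N %% 2 == 0)%N then (if false then 1 else -1) else -(if false then 1 else -1)) (b, a) (tau N i) (tau N j)
     * eps N (if false then 1 else -1) j).
Proof.
move=> N2 iN jN [H1 [H2 H3]].
rewrite /F /tau /eps /bS /aS /=.
repeat dest_eq; rewrite /= ?mulr0n ?mulr1n; unify_idx b; unify_idx a; lra.
Qed.


Lemma F_sym N s p i j : F N s p i j = F N s p j i.
Proof.
rewrite /F; case: (eqVneq i j) => [->|ne]; first by [].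
rewrite !mulr0n !mul0r !add0r.
rewrite (addrC ((j == i.+1)%:R * _)).
by rewrite (addrC (((j == 0%N) && _)%:R)) (andbC (j == 0%N)) (andbC (j == N.-1)).
Qed.

Lemma entry (N : nat) (c : bool) (b a : nat -> R) (i j : nat) :
  (2 <= N)%N -> (i < N)%N -> (j < N)%N ->
  F N (if c then 1 else -1) (bS N b, aS N a) i j =
  - (eps N (if c then 1 else -1) i *
     F N (if (N %% 2 == 0)%N then (if c then 1 else -1) else -(if c then 1 else -1)) (b, a) (tau N i) (tau N j)
     * eps N (if c then 1 else -1) j).
Proof.
move=> N2.
wlog ij : i j / (i <= j)%N.
  move=> W iN jN; case: (leqP i j) => [ij|ji]; first exact: W.
  rewrite F_sym (F_sym _ _ _ (tau N i)) W //; [ring | lia].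
move=> iN jN.
case: (eqVneq j N.-1) => [jE|/eqP jn].
  case: (eqVneq i N.-1) => [iE|/eqP ine].
    by case: c; [apply: entry_A_true|apply: entry_A_false].
  by case: c; [apply: entry_B_true|apply: entry_B_false] => //; split => //; lia.
by case: c; [apply: entry_C_true|apply: entry_C_false] => //; lia.
Qed.


Lemma md_eq N k r m : (0 < r <= N)%N -> (k + N - 1 = r.-1 + m * N)%N -> md N k = r.
Proof.
move=> /andP [r0 rN] E; rewrite /md E addnC modnMDl modn_small; last by lia.
by rewrite prednK.
Qed.

Lemma Sop1 N (b a : nat -> R) i : (2 <= N)%N -> (i < N)%N ->
  (Sop N (b, a)).1 i.+1 = bS N b i.+1.
Proof.
move=> N2 iN; rewrite /Sop /bS /=; congr (- b _).
case: eqP => E.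
  by apply: (@md_eq _ _ _ 0); lia.
by apply: (@md_eq _ _ _ 1); lia.
Qed.

Lemma Sop2 N (b a : nat -> R) k : (2 <= N)%N -> (0 < k <= N)%N ->
  (Sop N (b, a)).2 k = aS N a k.
Proof.
move=> N2 kN; rewrite /Sop /aS /=; congr (a _).
case: eqP => E1.
  by apply: (@md_eq _ _ _ 1); lia.
case: eqP => E2.
  by apply: (@md_eq _ _ _ 1); lia.
by apply: (@md_eq _ _ _ 2); lia.
Qed.

Lemma Sop_F N s (b a : nat -> R) i j : (2 <= N)%N -> (i < N)%N -> (j < N)%N ->
  F N s (Sop N (b, a)) i j = F N s (bS N b, aS N a) i j.
Proof.
move=> N2 iN jN; rewrite /F Sop1 // !Sop2 //; lia.
Qed.

Lemma tau_lt N i : (i < N)%N -> (tau N i < N)%N.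
Proof. move=> iN; rewrite /tau; case: eqP; lia. Qed.

Lemma tau_inv N i : (i < N)%N -> tau N (tau N i) = i.
Proof.
move=> iN; rewrite /tau; case: (i =P N.-1) => E1.
  by rewrite eqxx E1.
case: ((N - 2 - i)%N =P N.-1) => E2; lia.
Qed.

Lemma LmatF N s p (i j : 'I_N) : Lmat N s p i j = F N s p i j.
Proof. by rewrite mxE. Qed.

Definition tauo {N} (i : 'I_N) : 'I_N := Ordinal (@tau_lt N i (ltn_ord i)).

Definition Xm N (s : R) : 'M[R]_N :=
  \matrix_(i < N, j < N) (eps N s i * (j == tauo i)%:R).

Lemma sum_sel {N} (t : 'I_N) (f : 'I_N -> R) :
  \sum_(k < N) (k == t)%:R * f k = f t.
Proof.
rewrite (bigD1 t) //= eqxx mul1r big1 ?addr0 // => k /negPf ->; by rewrite mul0r.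
Qed.

Lemma Xm_mulE {N} s (M : 'M[R]_N) i j :
  (Xm N s *m M *m (Xm N s)^T) i j = eps N s i * M (tauo i) (tauo j) * eps N s j.
Proof.
rewrite !mxE.
under eq_bigr => k _ do rewrite !mxE.
under eq_bigr => k _ do under eq_bigr => l _ do rewrite !mxE.
transitivity (\sum_(k < N) (k == tauo j)%:R * (eps N s i * M (tauo i) k * eps N s j)).
  apply: eq_bigr => k _.
  rewrite (_ : \sum_(l < N) _ = eps N s i * M (tauo i) k); last first.
    rewrite -(sum_sel (tauo i) (fun l => eps N s i * M l k)).
    by apply: eq_bigr => l _; ring.
  ring.
by rewrite sum_sel.
Qed.

Lemma eps_sq N (c : bool) i : eps N (if c then 1 else -1) i * eps N (if c then 1 else -1) i = 1.
Proof. rewrite /eps; case: c; case: (i == N.-1); case: (i %% 2 == 0)%N; ring. Qed.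

Lemma Xm_orth N (c : bool) :
  (Xm N (if c then 1 else -1))^T *m Xm N (if c then 1 else -1) = 1%:M.
Proof.
apply: mulmx1C.
apply/matrixP => i j.
have := Xm_mulE (if c then 1 else -1) 1%:M i j.
rewrite mulmx1 => ->.
rewrite !mxE.
case: (eqVneq i j) => [->|ne].
  by rewrite !eqxx mulr1 eps_sq.
have -> : (tauo i == tauo j) = false.
  apply/negbTE; apply: contra ne => /eqP /(congr1 val) /= E.
  apply/eqP/val_inj => /=.
  by rewrite -(@tau_inv N i (ltn_ord i)) E tau_inv.
by rewrite mulr0n mulr0 mul0r ?(negbTE ne) ?mulr0n.
Qed.


Lemma Lmat_sym N (s : R) p : (Lmat N s p)^T = Lmat N s p.
Proof.
apply/matrixP => i j; rewrite !mxE.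
case: (eqVneq i j) => [->|ne]; first by [].
have nij : (i == j :> nat) = false by apply/negbTE.
have nji : (j == i :> nat) = false by rewrite eq_sym; apply/negbTE.
rewrite nij nji !mul0r !add0r.
rewrite (addrC ((j == i.+1 :> nat)%:R * _)).
by rewrite (addrC (((j == 0%N :> nat) && _)%:R)) (andbC (j == 0%N :> nat)) (andbC (j == N.-1 :> nat)).
Qed.

Lemma Lmat_S N (c : bool) (b a : nat -> R) : (2 <= N)%N ->
  Lmat N (if c then 1 else -1) (Sop N (b, a)) =
  - (Xm N (if c then 1 else -1) *m
     Lmat N (if (N %% 2 == 0)%N then (if c then 1 else -1) else -(if c then 1 else -1)) (b, a)
     *m (Xm N (if c then 1 else -1))^T).
Proof.
move=> N2; apply/matrixP => i j.
rewrite LmatF Sop_F // entry // [RHS]mxE Xm_mulE !LmatF.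
by [].
Qed.

Lemma eigs_spec N (s : R) p : is_eigseq (Lmat N s p) (eigs (Lmat N s p)).
Proof.
have [s0 H] := @eigseq_exists R _ _ (Lmat_sym N s p).
by rewrite (@eigs_eq R _ _ _ H).
Qed.

Lemma eigs_size N (s : R) p : size (eigs (Lmat N s p)) = N.
Proof. exact: (@is_eigseq_size R _ _ _ (eigs_spec N s p)). Qed.

Lemma eigs_S N (c : bool) (b a : nat -> R) : (2 <= N)%N ->
  eigs (Lmat N (if c then 1 else -1) (Sop N (b, a))) =
  rev (map -%R (eigs (Lmat N (if (N %% 2 == 0)%N then (if c then 1 else -1) else -(if c then 1 else -1)) (b, a)))).
Proof.
move=> N2; apply: (@eigs_eq R).
move: (eigs_spec N (if (N %% 2 == 0)%N then (if c then 1 else -1) else -(if c then 1 else -1)) (b, a)).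
move: (eigs_size N (if (N %% 2 == 0)%N then (if c then 1 else -1) else -(if c then 1 else -1)) (b, a)).
rewrite (Lmat_S N c b a N2).
set L := Lmat N _ (b, a).
move=> Hsz [S1 E1].
split.
  rewrite rev_sorted sorted_map; apply: sub_sorted S1 => x y /=.
  by rewrite lerN2.
rewrite (@char_polyN R) char_poly_conj; last exact: Xm_orth.
rewrite E1 -{1}Hsz (@prod_negX R).
by apply: perm_big; rewrite perm_sym perm_rev.
Qed.

Lemma nth_revN (s : seq R) k : (k < size s)%N ->
  nth 0 (rev (map -%R s)) k = - nth 0 s (size s - k.+1).
Proof.
move=> ks; rewrite nth_rev size_map // (nth_map 0) //.
by move: ks; case: (size s) => [|n] // _; rewrite subSS ltnS leq_subr.
Qed.

Lemma sort_revN (u v w : seq R) : perm_eq w (v ++ u) ->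
  sort <=%R (rev (map -%R u) ++ rev (map -%R v)) = rev (map -%R (sort <=%R w)).
Proof.
move=> Pw.
apply: (sorted_eq le_trans le_anti).
- by apply: sort_sorted; exact: le_total.
- rewrite rev_sorted sorted_map; apply: sub_sorted (sort_sorted (@le_total _ R) w) => x y /=.
  by rewrite lerN2.
- rewrite perm_sort -rev_cat -map_cat perm_rev.
  by rewrite perm_sym perm_rev perm_map // perm_sort perm_sym // perm_sym Pw.
Qed.

End S.

Theorem lemma2p3 (R : realType) (N : nat) (b a : nat -> R) :
  (2 <= N)%N ->
  (forall j : nat, (1 <= j <= N)%N -> 0 < a j) ->
  (forall j : nat, (1 <= j <= 2 * N)%N ->
     lam N (Sop N (b, a)) j = - lam N (b, a) (2 * N + 1 - j)) /\
  (~~ odd N -> forall j : nat, (1 <= j <= N)%N ->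
     lamp N (Sop N (b, a)) j = - lamp N (b, a) (N + 1 - j) /\
     lamm N (Sop N (b, a)) j = - lamm N (b, a) (N + 1 - j)) /\
  (odd N -> forall j : nat, (1 <= j <= N)%N ->
     lamp N (Sop N (b, a)) j = - lamm N (b, a) (N + 1 - j) /\
     lamm N (Sop N (b, a)) j = - lamp N (b, a) (N + 1 - j)) /\
  (forall k : nat, (1 <= k <= N - 1)%N ->
     gap N (Sop N (b, a)) k = gap N (b, a) (N - k)).
Proof.
move=> N2 _.
have Ep0 := @eigs_S R N true b a N2.
have Em0 := @eigs_S R N false b a N2.
have s1 := @eigs_size R N 1 (b, a).
have s2 := @eigs_size R N (-1) (b, a).
set e1 := eigs (Lmat N 1 (b, a)) in s1 s2 *.
set e2 := eigs (Lmat N (-1) (b, a)) in s1 s2 *.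
have Ep : eigs (Lmat N 1 (Sop N (b, a))) = rev (map -%R (if odd N then e2 else e1)).
  by rewrite Ep0 /= modn2; case: (odd N).
have Em : eigs (Lmat N (-1) (Sop N (b, a))) = rev (map -%R (if odd N then e1 else e2)).
  by rewrite Em0 /= modn2; case: (odd N); rewrite /= ?opprK.
clear Ep0 Em0.
have Hlam : forall j, (1 <= j <= 2 * N)%N ->
    lam N (Sop N (b, a)) j = - lam N (b, a) (2 * N + 1 - j).
  move=> j /andP [j1 j2].
  rewrite /lam -/e1 -/e2 Ep Em.
  have Hw : perm_eq (e1 ++ e2) ((if odd N then e1 else e2) ++ (if odd N then e2 else e1)).
    by case: (odd N); rewrite ?perm_refl // perm_catC.
  rewrite (@sort_revN R _ _ _ Hw) nth_revN size_sort size_cat; case: (odd N); rewrite ?s1 ?s2;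
    try (congr (- nth _ _ _); lia); lia.
split; first exact: Hlam.
split.
  move=> ev j /andP [j1 j2]; rewrite /lamp /lamm -/e1 -/e2 Ep Em (negbTE ev) /=.
  by rewrite !nth_revN ?s1 ?s2; try split; try (congr (- nth _ _ _); lia); lia.
split.
  move=> od j /andP [j1 j2]; rewrite /lamp /lamm -/e1 -/e2 Ep Em od /=.
  by rewrite !nth_revN ?s1 ?s2; try split; try (congr (- nth _ _ _); lia); lia.
move=> k /andP [k1 k2].
rewrite /gap !Hlam; try lia.
rewrite (_ : (2 * N + 1 - (2 * k).+1 = 2 * (N - k))%N); last by lia.
rewrite (_ : (2 * N + 1 - 2 * k = (2 * (N - k)).+1)%N); last by lia.
ring.
Qed.
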